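(* Let $n\geq a\geq 2$ be integers, and let $\ell$ be the smallest integer for which $\binom{\ell}{\lfloor \ell/2\rfloor}\geq a$. Then the Boolean lattice $(2^{[n-a+\ell]},\subseteq)$ of all subsets of $\{1,\dots,n-a+\ell\}$ ordered by inclusion contains every $n$-element poset which has an antichain of size $a$.
   Context: A poset $(U,\leq)$ contains a poset $(P,\preceq)$ if there is a subset $P'\subseteq U$ such that $(P',\leq)$ (the restriction of $\leq$ to $P'$) is isomorphic to $(P,\preceq)$; i.e. containment is as an induced subposet. An antichain is a set of pairwise incomparable elements. *)

(* Defs.v *)
From mathcomp Require Import all_boot all_order.
Set Implicit Arguments. Unset Strict Implicit. Unset Printing Implicit Defensive.
Import Order.TTheory.
Local Open Scope order_scope.

Definition antichain (d : Order.disp_t) (T : finPOrderType d) (A : {set T}) : Prop :=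
  forall x y, x \in A -> y \in A -> x != y -> ~~ (x >=< y).

(* The Boolean lattice (2^[m], ⊆) contains the poset T as an induced subposet:
   there is a subset P' of 2^[m] and an order isomorphism T ≅ (P', ⊆);
   equivalently an injective map f with x <= y <-> f x ⊆ f y. *)
Definition boolean_contains (m : nat) (d : Order.disp_t) (T : finPOrderType d) : Prop :=
  exists f : T -> {set 'I_m},
    injective f /\ forall x y : T, (x <= y) = (f x \subset f y).

(* Main.v *)
Require Import Defs.
From mathcomp Require Import all_boot all_order.
From mathcomp Require Import zify.
Local Open Scope order_scope.
Import Order.TTheory.

Lemma transfer_contains (m : nat) (d : Order.disp_t) (T : finPOrderType d)
  (G : finType) (E : #|G| = m) (f : T -> {set G}) :
  (forall x y : T, (x <= y) = (f x \subset f y)) -> boolean_contains m T.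
Proof.
move=> Hf.
pose h : G -> 'I_m := fun g => cast_ord E (enum_rank g).
have hinj : injective h.
  by move=> g1 g2 /(congr1 val) /= /val_inj /enum_rank_inj.
have Hs : forall X Y : {set G}, (h @: X \subset h @: Y) = (X \subset Y).
  move=> X Y; apply/idP/idP; last exact: imsetS.
  move=> /subsetP sub; apply/subsetP => x xX.
  have : h x \in h @: X by apply/imsetP; exists x.
  by move/sub => /imsetP [y yY /hinj ->].
exists (fun x => h @: f x); split.
  move=> x y Exy; apply/le_anti; rewrite !Hf -!Hs Exy subxx //.
by move=> x y; rewrite Hs Hf.
Qed.

Theorem lemma3p2 (n a l : nat) (Ha2 : (2 <= a)%N) (Han : (a <= n)%N)
  (Hl : (a <= 'C(l, l./2))%N)
  (Hlmin : forall k : nat, (k < l)%N -> ('C(k, k./2) < a)%N)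
  (d : Order.disp_t) (T : finPOrderType d) (HT : #|T| = n)
  (HA : exists A : {set T}, #|A| = a /\ antichain A) :
  boolean_contains (n - a + l) T.
Proof.
case: HA => A [cardA antiA].
have l2 : (2 <= l)%N.
  case: l Hl {Hlmin} => [|[|l]] //=; rewrite ?bin0 => H; by have := leq_trans Ha2 H.
pose L := [set X : {set 'I_l} | #|X| == l./2].
have cardL : #|L| = 'C(l, l./2) by rewrite card_draws card_ord.
pose S (x : T) : {set 'I_l} := nth set0 (enum L) (index x (enum A)).
have idxA : forall x, x \in A -> (index x (enum A) < size (enum L))%N.
  move=> x xA; rewrite -cardE cardL; apply: leq_trans Hl.
  by rewrite -cardA cardE index_mem mem_enum.
have SL : forall x, x \in A -> #|S x| = l./2.
  move=> x xA; have : S x \in enum L by apply: mem_nth; exact: idxA.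
  by rewrite mem_enum inE => /eqP.
have Sinj : forall x z, x \in A -> z \in A -> S x = S z -> x = z.
  move=> x z xA zA /eqP; rewrite /S nth_uniq ?idxA ?enum_uniq // => /eqP E.
  have hx : x \in enum A by rewrite mem_enum.
  have hz : z \in enum A by rewrite mem_enum.
  by rewrite -(nth_index x hx) -(nth_index x hz) E.
pose up (w : T) := [exists x in A, x < w].
have upA : forall w, w \in A -> up w = false.
  move=> w wA; apply/negbTE/existsP => [[x /andP [xA xw]]].
  have xw' : x != w by rewrite lt_eqF.
  by have := antiA x w xA wA xw'; rewrite /Order.comparable (ltW xw).
have upmono : forall y z, y <= z -> up y -> up z.
  move=> y z yz /existsP [x /andP [xA xy]]; apply/existsP; exists x.
  by rewrite xA (lt_le_trans xy yz).
pose B := {x : T | x \notin A}.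
pose G := (B + 'I_l)%type.
pose f (w : T) : {set G} := [set c : G | match c with
   | inl b => if up (val b) then ~~ (w <= val b) else (val b <= w)
   | inr k => if up w then true else (w \in A) && (k \in S w) end].
apply: (@transfer_contains _ _ _ G _ f).
  rewrite card_sum card_ord card_sig.
  have -> : #|[pred x : T | x \notin A]| = #|~: A| by apply: eq_card => x; rewrite !inE.
  by rewrite cardsCs setCK HT cardA.
move=> y z; apply/idP/idP.
  move=> yz; apply/subsetP => c; rewrite !inE; case: c => [b|k].
    case: (up (val b)).
      by apply: contra => zb; apply: le_trans yz zb.
    by move=> by'; apply: le_trans by' yz.
  case upy: (up y); first by rewrite (upmono _ _ yz upy).
  case/andP => yA ky.
  have [<-|yneq] := eqVneq y z; first by rewrite upy yA.
  suff -> : up z by [].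
  by apply/existsP; exists y; rewrite yA lt_neqAle yneq yz.
move/subsetP => sub; apply/negPn/negP => nyz.
case zA: (z \in A); last first.
  case upz: (up z).
    have := sub (inl (exist _ z (negbT zA))); rewrite !inE /= upz lexx nyz.
    by move/(_ isT).
  (* z not in A, not up: f z middle empty *)
  case yA: (y \in A); last first.
    case upy: (up y); last first.
      have := sub (inl (exist _ y (negbT yA))); rewrite !inE /= upy lexx.
      by move/(_ isT); rewrite (negbTE nyz).
    have k : 'I_l by exists 0%N; apply: leq_trans l2.
    by have := sub (inr k); rewrite !inE upy upz zA; move/(_ isT).
  have : (0 < #|S y|)%N by rewrite SL // half_gt0.
  case/card_gt0P => k ky.
  by have := sub (inr k); rewrite !inE upA // yA ky upz zA; move/(_ isT).
have upz := upA z zA.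
have [k [kz kin]] : exists k, k \notin S z /\ inr k \in f y.
  case upy: (up y).
    have : ~~ ([set: 'I_l] \subset S z).
      apply/negP => /subset_leq_card; rewrite cardsT card_ord SL //.
      have := odd_double_half l; have : (0 < l./2)%N by rewrite half_gt0.
      case: (odd l) => /=; rewrite -addnn; set h := l./2; move=> h1 h2 h3; clear -h1 h2 h3; lia.
    case/subsetPn => k _ kz; exists k; split => //; by rewrite inE upy.
  case yA: (y \in A); last first.
    have := sub (inl (exist _ y (negbT yA))); rewrite !inE /= upy lexx.
    by move/(_ isT); rewrite (negbTE nyz).
  have : ~~ (S y \subset S z).
    apply/negP => syz.
    have : S y == S z by rewrite eqEcard syz (SL y yA) (SL z zA) leqnn.
    move/eqP/(Sinj _ _ yA zA) => E; by rewrite E lexx in nyz.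
  case/subsetPn => k ky kz; exists k; split => //; by rewrite inE upy yA.
by have := sub (inr k) kin; rewrite !inE upz zA (negbTE kz).
Qed.
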